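(* For each $\nu$, each $1\le i\le m$, each $1\le j<l\le N^\nu_i$ and all $\mathbf t,\mathbf u\ge\mathbf0$, $$0\le\mathrm{cov}(\chi^\nu_{i,j}(\mathbf t),\chi^\nu_{i,l}(\mathbf u))\le\sum_{k=1}^m(t_k\wedge u_k)\tilde N^\nu_k\lambda^\nu_{kii}$$ and $$\big|\mathrm{cov}(\chi^\nu_{i,j}(\mathbf t)-\chi^\nu_{i,j}(\mathbf u),\chi^\nu_{i,l}(\mathbf t)-\chi^\nu_{i,l}(\mathbf u))\big|\le 6\Big\{\sum_{k=1}^m\big([(t_k\vee u_k)\tilde N^\nu_k]-[(t_k\wedge u_k)\tilde N^\nu_k]\big)\mu^\nu_{ki}\Big\}\Big\{\sum_{k=1}^m(t_k\wedge u_k)\tilde N^\nu_k\lambda^\nu_{kii}\Big\}+2\sum_{k=1}^m\big([(t_k\vee u_k)\tilde N^\nu_k]-[(t_k\wedge u_k)\tilde N^\nu_k]\big)\lambda^\nu_{kii}.$$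
   Context: Fix $m\ge1$; $[x]$ is the integer part of $x$; sums/products over $1\le l\le x$ mean $1\le l\le[x]$. Fix $\nu$. Given integers $N^\nu_i\ge1$, $N^\nu=\sum_iN^\nu_i$, constants $\pi_i>0$, $\tilde N^\nu_k=N^\nu\pi_k$. Random vectors $\mathbf V^\nu_k=(V^\nu_{k,1},\dots,V^\nu_{k,m})\in[0,1]^m$; $\{\mathbf V^\nu_{(k,l)}:1\le k\le m,l\ge1\}$ independent with $\mathbf V^\nu_{(k,l)}\sim\mathbf V^\nu_k$ (infectivity vector of the $l$-th infective of type $k$). Individuals $(i,j)$, $1\le j\le N^\nu_i$. Conditionally on all infectivity vectors, the events ''infective $(k,l)$ contacts individual $(i,j)$'' are independent over all pairs with probabilities $V^\nu_{(k,l),i}$. For $\mathbf t=(t_1,\dots,t_m)\ge\mathbf0$, $\chi^\nu_{i,j}(\mathbf t)=1$ if $(i,j)$ is contacted by at least one infective $(k,l)$ with $1\le k\le m$, $1\le l\le t_k\tilde N^\nu_k$, and $0$ otherwise. $\mu^\nu_{ki}=\mathbb E[V^\nu_{k,i}]$, $\lambda^\nu_{kii}=\mathrm{var}(V^\nu_{k,i})$. $a\wedge b=\min$, $a\vee b=\max$. *)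

(* Defs.v *)
From HB Require Import structures.
From mathcomp Require Import all_boot all_order all_algebra.
From mathcomp Require Import all_classical all_reals all_analysis.
Set Implicit Arguments. Unset Strict Implicit. Unset Printing Implicit Defensive.
Import Order.TTheory GRing.Theory Num.Theory.
Local Open Scope classical_set_scope.
Local Open Scope ring_scope.

(* Conventions (0-indexed):
   - types are k, i : 'I_m;
   - the l-th infective of type k (paper: l >= 1) is indexed by l : nat,
     paper's infective (k, l+1);
   - individual (i, j) (paper: 1 <= j <= N_i) is indexed by j : nat, j < N i,
     paper's individual (i, j+1);
   - V k l i w  = V^nu_{(k,l+1),i}(w);
   - C k l i j w = "infective (k,l+1) contacts individual (i,j+1)". *)

Section Model.
Context {d : measure_display} {T : measurableType d} {R : realType}
  (P : probability T R) {m : nat}.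

Definition Vevent (V : 'I_m -> nat -> 'I_m -> T -> R) (k : 'I_m) (l : nat)
  (A : 'I_m -> set R) : set T := [set w | forall i, A i (V k l i w)].

Definition infectivity_vectors (V : 'I_m -> nat -> 'I_m -> T -> R) : Prop :=
  [/\ (forall k l i, measurable_fun setT (V k l i)),
      (forall k l i w, 0 <= V k l i w <= 1),
      (forall (F : seq ('I_m * nat)) (A : 'I_m -> nat -> 'I_m -> set R),
          uniq F -> (forall k l i, measurable (A k l i)) ->
          P [set w | forall p, p \in F -> Vevent V p.1 p.2 (A p.1 p.2) w]
          = (\prod_(p <- F) P (Vevent V p.1 p.2 (A p.1 p.2)))%E) &
      (forall k l (A : 'I_m -> set R), (forall i, measurable (A i)) ->
          P (Vevent V k l A) = P (Vevent V k 0 A))].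

(* conditionally on all infectivity vectors, the contact events are
   independent with probabilities V_(k,l),i : for every finite family of
   events on the vectors and every finite (duplicate-free) family of
   (infective, individual) pairs with prescribed outcomes b, *)
Definition contact_model (N : 'I_m -> nat) (V : 'I_m -> nat -> 'I_m -> T -> R)
  (C : 'I_m -> nat -> 'I_m -> nat -> T -> bool) : Prop :=
  (forall k l i j, measurable [set w | C k l i j w]) /\
  (forall (F : seq ('I_m * nat)) (A : 'I_m -> nat -> 'I_m -> set R)
          (S : seq (('I_m * nat) * ('I_m * nat)))
          (b : ('I_m * nat) * ('I_m * nat) -> bool),
      (forall k l i, measurable (A k l i)) -> uniq S ->
      (forall q, q \in S -> (q.2.2 < N q.2.1)%N) ->
      P [set w | (forall p, p \in F -> Vevent V p.1 p.2 (A p.1 p.2) w) /\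
                 (forall q, q \in S -> C q.1.1 q.1.2 q.2.1 q.2.2 w = b q)]
      = ('E_P[fun w =>
            ((\prod_(p <- F) \1_(Vevent V p.1 p.2 (A p.1 p.2)) w) *
            \prod_(q <- S) (if b q then V q.1.1 q.1.2 q.2.1 w
                            else 1 - V q.1.1 q.1.2 q.2.1 w))%R])%E).

End Model.

Definition Ntilde {R : realType} {m : nat} (N : 'I_m -> nat) (pi : 'I_m -> R)
  (k : 'I_m) : R := (\sum_(i < m) N i)%:R * pi k.

(* chi^nu_{i,j}(t): 1 if (i,j) is contacted by some infective (k,l) with
   1 <= l <= [t_k tilde N_k], i.e. 0-indexed l < [t_k tilde N_k] *)
Definition chi {d : measure_display} {T : measurableType d} {R : realType}
  {m : nat} (N : 'I_m -> nat) (pi : 'I_m -> R)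
  (C : 'I_m -> nat -> 'I_m -> nat -> T -> bool) (i : 'I_m) (j : nat)
  (t : 'I_m -> R) : T -> R :=
  \1_[set w | exists (k : 'I_m) (l : nat),
                (l < Num.truncn (t k * Ntilde N pi k))%N /\ C k l i j w].

Definition mu_ {d : measure_display} {T : measurableType d} {R : realType}
  (P : probability T R) {m : nat} (V : 'I_m -> nat -> 'I_m -> T -> R)
  (k i : 'I_m) : R := fine ('E_P[V k 0%N i])%E.
Definition lambda_ {d : measure_display} {T : measurableType d} {R : realType}
  (P : probability T R) {m : nat} (V : 'I_m -> nat -> 'I_m -> T -> R)
  (k i : 'I_m) : R := fine ('V_P[V k 0%N i])%E.

(* Main.v *)
Require Import Defs.
From HB Require Import structures.
From mathcomp Require Import all_boot all_order all_algebra.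
From mathcomp Require Import all_classical all_reals all_analysis.
From mathcomp Require Import measurable_realfun.
From mathcomp Require Import zify ring lra.
Set Implicit Arguments. Unset Strict Implicit. Unset Printing Implicit Defensive.
Import Order.TTheory GRing.Theory Num.Theory.
Local Open Scope classical_set_scope.
Local Open Scope ring_scope.


Section Gen.
Context {d : measure_display} {T : measurableType d} {R : realType}
  (P : probability T R).

Definition bmf (f : T -> R) :=
  measurable_fun setT f /\ exists M : R, forall x, `|f x| <= M.

Lemma bmf_Lfun f : bmf f -> f \in Lfun P 1.
Proof.
move=> [mf [M hM]]; apply/Lfun1_integrable.
apply: measurable_bounded_integrable => //.
  exact: (le_lt_trans (probability_le1 P measurableT) (ltry 1)).
exists M; split; first by rewrite num_real.
by move=> y hy x _; exact: le_trans (hM x) (ltW hy).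
Qed.

Definition Ex (f : T -> R) : R := fine ('E_P[f])%E.

Lemma ExE f : bmf f -> ('E_P[f] = (Ex f)%:E)%E.
Proof. by move=> hf; rewrite /Ex fineK// expectation_fin_num// bmf_Lfun. Qed.

Lemma bmf_cst c : bmf (cst c).
Proof. by split; [exact: measurable_cst | exists `|c| => x]. Qed.

Lemma bmf_indic A : measurable A -> bmf (\1_A).
Proof.
move=> mA; split; first exact: measurable_indic.
by exists 1 => x; rewrite indicE; case: (x \in A); rewrite ?normr1 ?normr0.
Qed.

Lemma bmfD f g : bmf f -> bmf g -> bmf (f \+ g).
Proof.
move=> [mf [M hM]] [mg [M' hM']]; split; first exact: measurable_funD.
by exists (M + M') => x; rewrite (le_trans (ler_normD _ _))// lerD.
Qed.

Lemma bmfN f : bmf f -> bmf (\- f).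
Proof.
move=> [mf [M hM]]; split; first exact: measurableT_comp.
by exists M => x; rewrite normrN.
Qed.

Lemma bmfB f g : bmf f -> bmf g -> bmf (f \- g).
Proof. by move=> hf hg; apply: bmfD => //; exact: bmfN. Qed.

Lemma bmfM f g : bmf f -> bmf g -> bmf (f \* g).
Proof.
move=> [mf [M hM]] [mg [M' hM']]; split; first exact: measurable_funM.
exists (`|M| * `|M'|) => x; rewrite normrM ler_pM//.
  exact: le_trans (hM x) (ler_norm _).
exact: le_trans (hM' x) (ler_norm _).
Qed.

Lemma bmf_prod (I : Type) (s : seq I) (F : I -> T -> R) :
  (forall p, bmf (F p)) -> bmf (fun w => \prod_(p <- s) F p w).
Proof.
move=> hF; elim: s => [|p s IH].
  by under eq_fun do rewrite big_nil; exact: bmf_cst.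
under eq_fun do rewrite big_cons.
exact: bmfM.
Qed.

Lemma bmf_sum (I : Type) (s : seq I) (F : I -> T -> R) :
  (forall p, bmf (F p)) -> bmf (fun w => \sum_(p <- s) F p w).
Proof.
move=> hF; elim: s => [|p s IH].
  by under eq_fun do rewrite big_nil; exact: bmf_cst.
under eq_fun do rewrite big_cons.
exact: bmfD.
Qed.

Lemma bmfZ k f : bmf f -> bmf (fun w => k * f w).
Proof. by move=> hf; apply: (bmfM (bmf_cst k) hf). Qed.

Lemma ExD f g : bmf f -> bmf g -> Ex (f \+ g) = Ex f + Ex g.
Proof.
move=> hf hg; rewrite /Ex expectationD ?bmf_Lfun// (ExE hf) (ExE hg) //.
Qed.

Lemma ExN f : bmf f -> Ex (\- f) = - Ex f.
Proof.
move=> hf; have -> : (\- f) = (-1) \o* f by apply/funext => x /=; rewrite mulrN1.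
by rewrite /Ex expectationZl ?bmf_Lfun// (ExE hf) /= mulN1r.
Qed.

Lemma ExB f g : bmf f -> bmf g -> Ex (f \- g) = Ex f - Ex g.
Proof. by move=> hf hg; rewrite ExD ?ExN//; exact: bmfN. Qed.

Lemma ExZ k f : bmf f -> Ex (fun w => k * f w) = k * Ex f.
Proof.
move=> hf; have -> : (fun w => k * f w) = k \o* f by apply/funext => x /=; rewrite mulrC.
by rewrite /Ex expectationZl ?bmf_Lfun// (ExE hf).
Qed.

Lemma Ex_cst c : Ex (cst c) = c.
Proof. by rewrite /Ex expectation_cst. Qed.

Lemma Ex_indic A : measurable A -> Ex (\1_A) = fine (P A).
Proof. by move=> mA; rewrite /Ex expectation_indic. Qed.

Lemma Ex_sum (I : Type) (s : seq I) (F : I -> T -> R) :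
  (forall p, bmf (F p)) -> Ex (fun w => \sum_(p <- s) F p w) = \sum_(p <- s) Ex (F p).
Proof.
move=> hF; elim: s => [|p s IH].
  by under eq_fun do rewrite big_nil; rewrite big_nil Ex_cst.
under eq_fun do rewrite big_cons.
by rewrite big_cons -IH -ExD//; exact: bmf_sum.
Qed.

Lemma Ex_ge0 f : bmf f -> (forall x, 0 <= f x) -> 0 <= Ex f.
Proof.
move=> hf f0; have := expectation_ge0 P f0.
by rewrite (ExE hf) lee_fin.
Qed.

Lemma Ex_le f g : bmf f -> bmf g -> (forall x, f x <= g x) -> Ex f <= Ex g.
Proof.
move=> hf hg fg; rewrite -subr_ge0 -ExB//; apply: Ex_ge0; first exact: bmfB.
by move=> x /=; rewrite subr_ge0.
Qed.

Lemma Ex_abs_le f c : bmf f -> (forall x, `|f x| <= c) -> `|Ex f| <= c.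
Proof.
move=> hf hc; rewrite ler_norml; apply/andP; split.
  by rewrite -(Ex_cst (- c)) Ex_le//; [exact: bmf_cst| move=> x; have := hc x; rewrite ler_norml => /andP[]].
by rewrite -[leRHS](Ex_cst c) Ex_le//; [exact: bmf_cst| move=> x; have := hc x; rewrite ler_norml => /andP[]].
Qed.

End Gen.


Section Real.
Context {R : realType}.

Lemma prod01 (I : Type) (s : seq I) (x : I -> R) :
  (forall p, 0 <= x p <= 1) -> 0 <= \prod_(p <- s) x p <= 1.
Proof.
move=> hx; elim: s => [|p s IH]; first by rewrite big_nil ler01 lexx.
rewrite big_cons; case/andP: IH => h0 h1; case/andP: (hx p) => x0 x1.
by rewrite mulr_ge0//= mulr_ile1.
Qed.

Lemma prod_diff_abs (I : Type) (s : seq I) (x y : I -> R) :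
  (forall p, 0 <= x p <= 1) -> (forall p, 0 <= y p <= 1) ->
  `|\prod_(p <- s) x p - \prod_(p <- s) y p| <= \sum_(p <- s) `|x p - y p|.
Proof.
move=> hx hy; elim: s => [|p s IH]; first by rewrite !big_nil subrr normr0.
rewrite !big_cons.
have -> : x p * \prod_(j <- s) x j - y p * \prod_(j <- s) y j =
  x p * (\prod_(j <- s) x j - \prod_(j <- s) y j) + (x p - y p) * \prod_(j <- s) y j.
  by rewrite mulrBr mulrBl addrA subrK.
rewrite (le_trans (ler_normD _ _))// [in leRHS]addrC lerD//.
  case/andP: (hx p) => x0 x1.
  by rewrite normrM -[leRHS]mul1r ler_pM// ger0_norm.
case/andP: (prod01 s hy) => y0 y1.
by rewrite normrM -[leRHS]mulr1 ler_pM// ger0_norm.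
Qed.

Lemma prodEFin (I : Type) (s : seq I) (x : I -> \bar R) :
  (forall p, x p \is a fin_num) ->
  (\prod_(p <- s) x p)%E = (\prod_(p <- s) fine (x p))%:E.
Proof.
move=> hx; elim: s => [|p s IH]; first by rewrite !big_nil.
by rewrite !big_cons IH -{1}(fineK (hx p)) EFinM.
Qed.

Lemma sum_ltK (n K : nat) :
  \sum_(r < n) ((r < K)%N%:R : R) = (minn n K)%:R.
Proof.
elim: n => [|n IH]; first by rewrite big_ord0 min0n.
rewrite big_ord_recr /= IH -natrD; congr (_%:R).
case: (ltnP n K) => h /=.
  by rewrite addn1 !minnE; have -> : (n.+1 - K = 0)%N by apply/eqP; rewrite subn_eq0.
  by rewrite addn0 !minnE; have : (K <= n)%N := h; lia.
Qed.

Lemma small0 (x c : R) : (forall n, (0 < n)%N -> `|x| <= c / n%:R) -> x = 0.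
Proof.
move=> H; apply/eqP; apply/negPn/negP => hx.
have ax : 0 < `|x| by rewrite normr_gt0.
have c0 : 0 <= c.
  by have := H 1%N isT; rewrite divr1 => /(le_trans (normr_ge0 _)).
pose n := (Num.truncn (c / `|x|)).+1.
have := H n isT; rewrite ler_pdivlMr ?ltr0Sn// => h.
have : c / `|x| < n%:R by rewrite /n truncnS_gt.
rewrite ltr_pdivrMr// => h2.
by move: h2; rewrite mulrC ltNge h.
Qed.

End Real.


Section Approx.
Context {d : measure_display} {T : measurableType d} {R : realType}
  (P : probability T R).

Definition lev (Y : T -> R) (c : R) : set T := [set w | c <= Y w].

Lemma mlev (Y : T -> R) c : measurable_fun setT Y -> measurable (lev Y c).
Proof.
move=> mY; have := mY measurableT (`[c, +oo[%classic) (measurable_itv _).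
rewrite setTI; congr measurable; apply/seteqP; split => w /=;
by rewrite in_itv /= andbT.
Qed.

Lemma indic_lev Y c w : \1_(lev Y c) w = ((c <= Y w)%R)%:R :> R.
Proof.
rewrite indicE; case: (boolP (c <= Y w)) => h.
  by rewrite mem_set.
by rewrite memNset //= /lev => h'; rewrite h' in h.
Qed.

Definition Yn (n : nat) (Y : T -> R) : T -> R :=
  fun w => n%:R^-1 * \sum_(r < n) \1_(lev Y ((r.+1)%:R / n%:R)) w.

Lemma Yn_val n Y w : (0 < n)%N -> 0 <= Y w <= 1 ->
  Yn n Y w = (Num.truncn (Y w * n%:R))%:R / n%:R.
Proof.
move=> n0 /andP[y0 y1]; rewrite /Yn mulrC; congr (_ * _).
have n0' : 0 < n%:R :> R by rewrite ltr0n.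
under eq_bigr do rewrite indic_lev ler_pdivrMr// -truncn_gt_nat.
rewrite sum_ltK; congr (_%:R); apply/minn_idPr.
rewrite -{2}(@natrK R n) le_truncn// ler_piMl//.
Qed.

Lemma Yn_bnd n Y w : (0 < n)%N -> 0 <= Y w <= 1 ->
  [/\ 0 <= Yn n Y w, Yn n Y w <= Y w & Y w - n%:R^-1 <= Yn n Y w].
Proof.
move=> n0 hy; rewrite Yn_val//; case/andP: hy => y0 y1.
have n0' : 0 < n%:R :> R by rewrite ltr0n.
have yn0 : 0 <= Y w * n%:R by rewrite mulr_ge0// ltW.
split; first by rewrite divr_ge0.
  by rewrite ler_pdivrMr// truncn_le.
rewrite ler_pdivlMr// mulrBl mulVf ?gt_eqF// lerBlDr.
by rewrite ltW// natr1 truncnS_gt.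
Qed.

Lemma bmf_Yn n (Y : T -> R) : measurable_fun setT Y -> bmf (Yn n Y).
Proof.
move=> mY; apply: bmfZ; apply: bmf_sum => r; apply: bmf_indic; exact: mlev.
Qed.

Lemma Ex_Yn n (Y : T -> R) : measurable_fun setT Y ->
  Ex P (Yn n Y) = n%:R^-1 * \sum_(r < n) fine (P (lev Y ((r.+1)%:R / n%:R))).
Proof.
move=> mY; rewrite /Yn ExZ; last by apply: bmf_sum => r; apply: bmf_indic; exact: mlev.
rewrite Ex_sum; last by move=> r; apply: bmf_indic; exact: mlev.
by congr (_ * _); apply: eq_bigr => r _; rewrite Ex_indic//; exact: mlev.
Qed.

Lemma bmf01 (Y : T -> R) : measurable_fun setT Y -> (forall w, 0 <= Y w <= 1) -> bmf Y.
Proof.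
move=> mY hY; split => //; exists 1 => w; case/andP: (hY w) => h0 h1.
by rewrite ger0_norm.
Qed.

Lemma Yn_close n (Y : T -> R) : (0 < n)%N -> measurable_fun setT Y -> (forall w, 0 <= Y w <= 1) ->
  `|Ex P Y - Ex P (Yn n Y)| <= n%:R^-1.
Proof.
move=> n0 mY hY; rewrite -ExB; [|exact: bmf01|exact: bmf_Yn].
apply: Ex_abs_le; first by apply: bmfB; [exact: bmf01|exact: bmf_Yn].
move=> w /=; have [h0 h1 h2] := Yn_bnd n0 (hY w).
by rewrite ger0_norm ?subr_ge0// lerBlDr -lerBlDl.
Qed.

Lemma Ex01 (Y : T -> R) : measurable_fun setT Y -> (forall w, 0 <= Y w <= 1) -> 0 <= Ex P Y <= 1.
Proof.
move=> mY hY; apply/andP; split.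
  by apply: Ex_ge0; [exact: bmf01| move=> w; case/andP: (hY w)].
by rewrite -[leRHS](Ex_cst P) Ex_le//; [exact: bmf01|exact: bmf_cst|move=> w; case/andP: (hY w)].
Qed.

Lemma Ex_determined (Y1 Y2 : T -> R) :
  measurable_fun setT Y1 -> (forall w, 0 <= Y1 w <= 1) ->
  measurable_fun setT Y2 -> (forall w, 0 <= Y2 w <= 1) ->
  (forall c, P (lev Y1 c) = P (lev Y2 c)) -> Ex P Y1 = Ex P Y2.
Proof.
move=> m1 h1 m2 h2 hc; apply/eqP; rewrite -subr_eq0; apply/eqP.
apply: (@small0 _ _ 2) => n n0.
have e : Ex P (Yn n Y1) = Ex P (Yn n Y2).
  by rewrite !Ex_Yn//; congr (_ * _); apply: eq_bigr => r _; rewrite hc.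
have -> : Ex P Y1 - Ex P Y2 = (Ex P Y1 - Ex P (Yn n Y1)) - (Ex P Y2 - Ex P (Yn n Y2)).
  by rewrite e; ring.
rewrite (le_trans (ler_normB _ _))// mulr_natl mulr2n lerD//; exact: Yn_close.
Qed.

End Approx.


Section Factor.
Context {d : measure_display} {T : measurableType d} {R : realType}
  (P : probability T R).

Lemma prod_indic (I : finType) (A : I -> set T) w :
  \prod_p \1_(A p) w = \1_([set w | forall p, A p w]) w :> R.
Proof.
rewrite [RHS]indicE; case: (boolP (w \in _)) => h.
  by apply: big1 => p _; rewrite indicE mem_set//; move: h; rewrite inE => /(_ p).
have [p Np] : exists p, ~ A p w.
  apply/existsNP => H; move/negP: h; apply; by rewrite inE.
by rewrite (bigD1 p)//= indicE memNset// mul0r.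
Qed.

Lemma measurable_all (I : finType) (A : I -> set T) :
  (forall p, measurable (A p)) -> measurable [set w | forall p, A p w].
Proof.
move=> mA; apply/(measurable_indicP R).
have -> : (\1_[set w | forall p, A p w] : T -> R) = fun w => \prod_p \1_(A p) w.
  by apply/funext => w; rewrite prod_indic.
have [h _] := bmf_prod (index_enum I) (fun p => @bmf_indic _ _ R _ (mA p)).
exact: h.
Qed.

Lemma prodP_EFin (I : Type) (s : seq I) (A : I -> set T) :
  (forall p, measurable (A p)) ->
  (\prod_(p <- s) P (A p))%E = (\prod_(p <- s) fine (P (A p)))%:E.
Proof.
move=> mA; elim: s => [|p s IH]; first by rewrite !big_nil.
by rewrite !big_cons IH EFinM fineK// fin_num_measure.
Qed.

Lemma Ex_factor (I : finType) (Y : I -> T -> R) :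
  (forall p, measurable_fun setT (Y p)) -> (forall p w, 0 <= Y p w <= 1) ->
  (forall r : I -> R, P [set w | forall p, r p <= Y p w] =
                     (\prod_p P (lev (Y p) (r p)))%E) ->
  Ex P (fun w => \prod_p Y p w) = \prod_p Ex P (Y p).
Proof.
move=> mY hY rect.
apply/eqP; rewrite -subr_eq0; apply/eqP; apply: (@small0 _ _ (2 * #|I|%:R)) => n n0.
pose Z := fun w => \prod_p Yn n (Y p) w.
have bY p : bmf (Y p) by exact: bmf01.
have bYn p : bmf (Yn n (Y p)) by exact: bmf_Yn.
pose c := \prod_(p : I) n%:R^-1 : R.
pose B (f : {ffun I -> 'I_n}) := [set w | forall p, ((f p).+1%:R / n%:R) <= Y p w].
have mB f : measurable (B f) by apply: measurable_all => p; exact: mlev.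
have ZE : Z = fun w => \sum_(f : {ffun I -> 'I_n}) c * \1_(B f) w.
  apply/funext => w; rewrite /Z /Yn.
  under eq_bigr do rewrite mulr_sumr.
  rewrite bigA_distr_bigA /=; apply: eq_bigr => f _.
  by rewrite big_split /= prod_indic.
have key : Ex P Z = \prod_p Ex P (Yn n (Y p)).
  rewrite ZE Ex_sum; last by move=> f; apply: bmfZ; exact: bmf_indic.
  rewrite (eq_bigr (fun f => c * fine (P (B f)))); last first.
    by move=> f _; rewrite ExZ ?Ex_indic//; exact: bmf_indic.
  under [RHS]eq_bigr => p _ do rewrite Ex_Yn// mulr_sumr.
  rewrite bigA_distr_bigA /=; apply: eq_bigr => f _.
  rewrite big_split /= rect; congr (_ * _).
  rewrite prodP_EFin ?fineK//; move=> p; exact: mlev.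
have e1 : `|Ex P (fun w => \prod_p Y p w) - Ex P Z| <= #|I|%:R * n%:R^-1.
  rewrite -ExB; [|exact: bmf_prod|exact: bmf_prod].
  apply: Ex_abs_le; first by apply: bmfB; exact: bmf_prod.
  move=> w /=.
  have hx : forall p, 0 <= Y p w <= 1 by move=> p; exact: hY.
  have hy : forall p, 0 <= Yn n (Y p) w <= 1.
    by move=> p; have [h0 h1 h2] := Yn_bnd n0 (hY p w); rewrite h0 (le_trans h1)//; case/andP: (hY p w).
  rewrite (le_trans (prod_diff_abs (index_enum I) hx hy))//.
  rewrite (@le_trans _ _ (\sum_(p : I) n%:R^-1))//.
    apply: ler_sum => p _; have [h0 h1 h2] := Yn_bnd n0 (hY p w).
    by rewrite ger0_norm ?subr_ge0// lerBlDr -lerBlDl.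
  by rewrite sumr_const mulr_natl.
have e2 : `|\prod_p Ex P (Y p) - \prod_p Ex P (Yn n (Y p))| <= #|I|%:R * n%:R^-1.
  have hx : forall p, 0 <= Ex P (Y p) <= 1 by move=> p; exact: Ex01.
  have hy : forall p, 0 <= Ex P (Yn n (Y p)) <= 1.
    move=> p; apply: Ex01; first by case: (bYn p).
    by move=> w; have [h0 h1 h2] := Yn_bnd n0 (hY p w); rewrite h0 (le_trans h1)//; case/andP: (hY p w).
  rewrite (le_trans (prod_diff_abs (index_enum I) hx hy))//.
  rewrite (@le_trans _ _ (\sum_(p : I) n%:R^-1))//.
    by apply: ler_sum => p _; exact: Yn_close.
  by rewrite sumr_const mulr_natl.
have -> : Ex P (fun w => \prod_p Y p w) - \prod_p Ex P (Y p) =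
  (Ex P (fun w => \prod_p Y p w) - Ex P Z) - (\prod_p Ex P (Y p) - \prod_p Ex P (Yn n (Y p))).
  by rewrite key; ring.
rewrite (le_trans (ler_normB _ _))// -mulrA mulr_natl mulr2n lerD//.
Qed.

End Factor.


Definition hfun {R : realType} (e : nat) (x : R) := (1 - x) ^+ e.

Lemma mhfun {R : realType} e : measurable_fun setT (@hfun R e).
Proof.
by apply: measurable_funX; apply: measurable_funB => //; exact: measurable_cst.
Qed.

Lemma hfun01 {R : realType} e (x : R) : 0 <= x <= 1 -> 0 <= hfun e x <= 1.
Proof.
case/andP => x0 x1; rewrite /hfun exprn_ge0 ?subr_ge0//= exprn_ile1// ?subr_ge0//.
by rewrite lerBlDr lerDl.
Qed.

Section Model2.
Context {d : measure_display} {T : measurableType d} {R : realType}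
  (P : probability T R) {m : nat} (N : 'I_m -> nat)
  (V : 'I_m -> nat -> 'I_m -> T -> R)
  (C : 'I_m -> nat -> 'I_m -> nat -> T -> bool)
  (hV : infectivity_vectors P V) (hC : contact_model P N V C) (i : 'I_m).

Lemma mV k l i' : measurable_fun setT (V k l i').
Proof. by case: hV => h _ _ _; exact: h. Qed.

Lemma V01 k l i' w : 0 <= V k l i' w <= 1.
Proof. by case: hV => _ h _ _; exact: h. Qed.

Definition gk k e := Ex P (fun w => hfun e (V k 0 i w)).

Lemma pair_inj L (p p' : 'I_m * 'I_L) : p'.1 = p.1 -> val p'.2 = val p.2 -> p' = p.
Proof. by case: p p' => [k l] [k' l'] /= -> /val_inj ->. Qed.

Lemma joint_factor (L : nat) (e : 'I_m * 'I_L -> nat) :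
  Ex P (fun w => \prod_(p : 'I_m * 'I_L) hfun (e p) (V p.1 p.2 i w)) =
  \prod_(p : 'I_m * 'I_L) gk p.1 (e p).
Proof.
case: hV => hm h01 hind hid.
pose Y := fun (p : 'I_m * 'I_L) w => hfun (e p) (V p.1 p.2 i w).
have mY p : measurable_fun setT (Y p) := measurableT_comp (mhfun _) (mV _ _ _).
have hY p w : 0 <= Y p w <= 1 := hfun01 _ (V01 _ _ _ _).
rewrite (@Ex_factor _ _ _ P _ Y)//; last first.
  move=> r.
  pose F := [seq (p.1, val p.2) | p <- index_enum ('I_m * 'I_L)%type].
  pose A k l' i' := if i' == i then
    [set x | forall p : 'I_m * 'I_L, (p.1, val p.2) = (k, l') -> r p <= hfun (e p) x]
    else setT.
  have := hind F A _ _.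
  have <- : [set w | forall p, p \in F -> Vevent V p.1 p.2 (A p.1 p.2) w] =
            [set w | forall p, r p <= Y p w].
    apply/seteqP; split => w /=.
      move=> H p; have := H (p.1, val p.2) (map_f _ (mem_index_enum p)) i.
      by rewrite /A eqxx; apply.
    move=> H p0 /mapP [p _ ->] i' /=; rewrite /A; case: ifP => [/eqP -> | _ //] p' [e1 e2].
    by rewrite (pair_inj e1 e2); exact: H.
  move=> ->; last first.
  - move=> k l' i'; rewrite /A; case: ifP => _ //.
    apply: (@measurable_all _ _ R) => p.
    case: (pselect ((p.1, val p.2) = (k, l'))) => [h|h].
      rewrite [X in measurable X](_ : _ = lev (hfun (e p)) (r p)).
        exact: (mlev (T:=R) _ (mhfun _)).
      by apply/seteqP; split => x /=; [exact | move=> + _].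
    rewrite [X in measurable X](_ : _ = setT).
      exact: measurableT.
    by apply/seteqP; split => x //= _ /h.
  - by rewrite map_inj_uniq ?index_enum_uniq // => -[k1 l1] [k2 l2] /= [-> /val_inj ->].
  rewrite big_map; apply: eq_bigr => p _; congr (P _); apply/seteqP; split => w /=.
    by move/(_ i); rewrite /A eqxx; apply.
  move=> H i'; rewrite /A; case: ifP => [/eqP -> | //] p' [e1 e2].
  by rewrite (pair_inj e1 e2).
apply: eq_bigr => p _; apply: Ex_determined => //.
- exact: measurableT_comp (mhfun _) (mV _ _ _).
- by move=> w; exact: hfun01 (V01 _ _ _ _).
move=> c.
have := hid p.1 p.2 (fun i' => if i' == i then [set x | c <= hfun (e p) x] else setT) _.
have E k l' : Vevent V k l' (fun i' => if i' == i then [set x | c <= hfun (e p) x] else setT)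
  = lev (fun w => hfun (e p) (V k l' i w)) c.
  apply/seteqP; split => w /=.
    by move/(_ i); rewrite eqxx.
  by move=> h i'; case: ifP => [/eqP -> //|_ //].
rewrite !E; apply.
move=> i'; case: ifP => _ //; exact: (mlev (T:=R) _ (mhfun _)).
Qed.

End Model2.


Lemma count_prod {R : realType} (g : nat -> R) a b L : g 0%N = 1 -> (a <= L)%N -> (b <= L)%N ->
  \prod_(l' < L) g ((l' < a) + (l' < b))%N = g 2%N ^+ minn a b * g 1%N ^+ ((a - b) + (b - a)).
Proof.
wlog ab : a b / (a <= b)%N.
  move=> H g0 aL bL; case: (boolP (a <= b)%N) => h; first exact: (H a b h g0 aL bL).
  rewrite -ltnNge in h.
  rewrite (eq_bigr (fun l' : 'I_L => g ((l' < b) + (l' < a))%N)); last by move=> l' _; rewrite addnC.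
  by rewrite (H b a (ltnW h) g0 bL aL) minnC [(b - a + _)%N]addnC.
move=> g0 aL bL.
rewrite -(big_mkord xpredT (fun x => g ((x < a) + (x < b))%N)) (@big_cat_nat _ _ _ a 0 L) //= (@big_cat_nat _ _ _ b a L) //=.
rewrite (@eq_big_nat _ _ _ 0 a _ (fun _ => g 2%N)); last first.
  by move=> x /andP[_ h]; rewrite h (leq_trans h ab).
rewrite (@eq_big_nat _ _ _ a b _ (fun _ => g 1%N)); last first.
  by move=> x /andP[h1 h2]; rewrite h2 ltnNge h1.
rewrite (@eq_big_nat _ _ _ b L _ (fun _ => g 0%N)); last first.
  by move=> x /andP[h1 h2]; rewrite ltnNge (leq_trans ab h1) ltnNge h1.
rewrite !prodr_const_nat g0 expr1n mulr1 subn0.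
have -> : minn a b = a by apply/minn_idPl.
by have -> : (a - b = 0)%N by apply/eqP; rewrite subn_eq0.
Qed.

Section Joint.
Context {d : measure_display} {T : measurableType d} {R : realType}
  (P : probability T R) {m : nat} (N : 'I_m -> nat)
  (V : 'I_m -> nat -> 'I_m -> T -> R)
  (C : 'I_m -> nat -> 'I_m -> nat -> T -> bool)
  (hV : infectivity_vectors P V) (hC : contact_model P N V C) (i : 'I_m).

Definition Zs (a : 'I_m -> nat) (x : nat) : set T :=
  [set w | forall k l', (l' < a k)%N -> C k l' i x w = false].

Definition Sx (c : 'I_m -> nat) (x : nat) : seq (('I_m * nat) * ('I_m * nat)) :=
  [seq ((k, l'), (i, x)) | k <- index_enum 'I_m, l' <- index_iota 0 (c k)].

Lemma memSx q c x :
  reflect (exists k l', (l' < c k)%N /\ q = ((k, l'), (i, x))) (q \in Sx c x).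
Proof.
apply: (iffP allpairsPdep).
  by move=> [k [l' [_ hl ->]]]; exists k, l'; split => //; move: hl; rewrite mem_index_iota.
by move=> [k [l' [hl ->]]]; exists k, l'; split => //; rewrite ?mem_index_enum ?mem_index_iota.
Qed.

Lemma uniq_Sx c x : uniq (Sx c x).
Proof.
apply: allpairs_uniq_dep; [exact: index_enum_uniq | move=> k _; exact: iota_uniq |].
by move=> [k1 l1] [k2 l2] _ _ /= [e1 e2]; subst.
Qed.

Lemma prod_Sx c x w L : (forall k, c k <= L)%N ->
  \prod_(q <- Sx c x) (1 - V q.1.1 q.1.2 q.2.1 w) =
  \prod_(k < m) \prod_(l' < L) (1 - V k l' i w) ^+ (l' < c k)%N.
Proof.
move=> hc; rewrite big_allpairs_dep /=; apply: eq_bigr => k _.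
rewrite (big_mkord xpredT (fun l' => 1 - V k l' i w)) (big_ord_widen L (fun l' => 1 - V k l' i w) (hc k)) big_mkcond /=.
by apply: eq_bigr => l' _; case: (l' < c k)%N; rewrite ?expr1 ?expr0.
Qed.

Lemma joint a b j l : j != l -> (j < N i)%N -> (l < N i)%N ->
  P (Zs a j `&` Zs b l) =
  (\prod_(k < m) (gk P V i k 2 ^+ minn (a k) (b k) *
                  gk P V i k 1 ^+ ((a k - b k) + (b k - a k))))%:E.
Proof.
move=> jl jN lN; case: hC => _ hc.
pose S := Sx a j ++ Sx b l.
pose L := (\sum_(k < m) (a k + b k))%N.
have aL k : (a k <= L)%N.
  by rewrite /L (bigD1 k) //= -addnA leq_addr.
have bL k : (b k <= L)%N.
  by rewrite /L (bigD1 k) //=; apply: leq_trans (leq_addl (a k) (b k)) (leq_addr _ _).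
have := hc [::] (fun _ _ _ => setT) S (fun _ => false) (fun _ _ _ => measurableT) _ _.
have -> : [set w | (forall p, p \in [::] -> Vevent V p.1 p.2 ((fun _ _ _ => setT) p.1 p.2) w) /\
                   (forall q, q \in S -> C q.1.1 q.1.2 q.2.1 q.2.2 w = (fun _ => false) q)]
          = Zs a j `&` Zs b l.
  apply/seteqP; split => w /=.
    move=> [_ H]; split => k l' hl.
      by apply: (H ((k, l'), (i, j))); rewrite mem_cat; apply/orP; left; apply/memSx; exists k, l'.
    by apply: (H ((k, l'), (i, l))); rewrite mem_cat; apply/orP; right; apply/memSx; exists k, l'.
  move=> [Ha Hb]; split => // q; rewrite mem_cat => /orP[] /memSx [k [l' [hl ->]]] /=.
    exact: Ha.
  exact: Hb.
have uS : uniq S.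
  rewrite cat_uniq !uniq_Sx andbT /=; apply/hasPn => q /memSx [k [l' [_ ->]]].
  apply/negP => /memSx [k' [l'' [_ [_ _ ejl]]]].
  by move: jl; rewrite ejl eqxx.
have bS : forall q, q \in S -> (q.2.2 < N q.2.1)%N.
  by move=> q; rewrite mem_cat => /orP[] /memSx [k [l' [_ ->]]].
move=> /(_ uS bS) ->.
pose e := fun p : 'I_m * 'I_L => ((p.2 < a p.1) + (p.2 < b p.1))%N.
have -> : (fun w => \prod_(p <- [::]) \1_(Vevent V p.1 p.2 (fun=> [set: R])) w *
           \prod_(q <- S) (1 - V q.1.1 q.1.2 q.2.1 w)) =
          fun w => \prod_(p : 'I_m * 'I_L) hfun (e p) (V p.1 p.2 i w).
  apply/funext => w /=; rewrite big_nil mul1r big_cat /= (prod_Sx _ _ aL) (prod_Sx _ _ bL).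
  rewrite -big_split /=; under eq_bigr do rewrite -big_split /=.
  rewrite pair_big /=; apply: eq_bigr => -[k l'] _ /=.
  by rewrite /hfun /e /= exprD.
rewrite (@ExE _ _ _ P (fun w => \prod_(p : 'I_m * 'I_L) hfun (e p) (V p.1 p.2 i w))); last first.
  apply: bmf_prod => p; apply: bmf01.
    exact: measurableT_comp (mhfun _) (mV hV _ _ _).
  by move=> w; exact: hfun01 (V01 hV _ _ _ _).
rewrite joint_factor//; congr (_%:E).
rewrite -(pair_big xpredT xpredT (fun k (l' : 'I_L) => gk P V i k (e (k, l')))) /=.
apply: eq_bigr => k _; rewrite /e /=.
apply: (count_prod (g := gk P V i k)) => //.
rewrite /gk.
have -> : (fun w => hfun 0 (V k 0 i w)) = cst 1 by apply/funext => w; rewrite /hfun expr0.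
by rewrite Ex_cst.
Qed.

End Joint.


Section Alg.
Context {R : realType}.

Lemma pow_diff (x y : R) n : 0 <= y -> y <= x -> x <= 1 ->
  0 <= x ^+ n - y ^+ n <= n%:R * (x - y).
Proof.
move=> y0 yx x1; elim: n => [|n /andP[IH0 IH1]]; first by rewrite !expr0 subrr mul0r lexx.
have x0 : 0 <= x by exact: le_trans yx.
have -> : x ^+ n.+1 - y ^+ n.+1 = x * (x ^+ n - y ^+ n) + (x - y) * y ^+ n.
  by rewrite !exprS; ring.
apply/andP; split.
  by rewrite addr_ge0// mulr_ge0// ?subr_ge0// exprn_ge0.
rewrite mulr_natl mulrS -mulr_natl [leRHS]addrC lerD//.
  by rewrite (le_trans _ IH1)// ler_piMl.
rewrite ler_piMr ?subr_ge0// exprn_ile1//.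
exact: le_trans yx x1.
Qed.

Lemma prod_diff1 (I : Type) (s : seq I) (x y : I -> R) :
  (forall k, 0 <= y k <= x k) -> (forall k, x k <= 1) ->
  0 <= \prod_(k <- s) x k - \prod_(k <- s) y k <= \sum_(k <- s) (x k - y k).
Proof.
move=> hyx hx1; apply/andP; split.
  by rewrite subr_ge0; apply: ler_prod => k _; exact: hyx.
have hx : forall k, 0 <= x k <= 1.
  by move=> k; case/andP: (hyx k) => h0 h1; rewrite (le_trans h0 h1) hx1.
have hy : forall k, 0 <= y k <= 1.
  by move=> k; case/andP: (hyx k) => h0 h1; rewrite h0 (le_trans h1 (hx1 k)).
rewrite (le_trans (ler_norm _))// (le_trans (prod_diff_abs s hx hy))//.
by apply: ler_sum => k _; rewrite ger0_norm// subr_ge0; case/andP: (hyx k).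
Qed.

Lemma prod_pow_diff (I : Type) (s : seq I) (x y : I -> R) (n : I -> nat) :
  (forall k, 0 <= y k <= x k) -> (forall k, x k <= 1) ->
  0 <= \prod_(k <- s) x k ^+ n k - \prod_(k <- s) y k ^+ n k <=
       \sum_(k <- s) (n k)%:R * (x k - y k).
Proof.
move=> hyx hx1.
have h1 : forall k, 0 <= y k ^+ n k <= x k ^+ n k.
  move=> k; case/andP: (hyx k) => h0 h2.
  by rewrite exprn_ge0// lerXn2r// ?nnegrE// (le_trans h0 h2).
have h2 : forall k, x k ^+ n k <= 1.
  move=> k; case/andP: (hyx k) => h0 h3; rewrite exprn_ile1//.
  exact: le_trans h0 h3.
have /andP[-> h3] := prod_diff1 s h1 h2.
rewrite (le_trans h3)//; apply: ler_sum => k _.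
case/andP: (hyx k) => h0 h4.
by case/andP: (pow_diff (n k) h0 h4 (hx1 k)).
Qed.

Lemma sq_diff_le (x y : R) : 0 <= x <= 1 -> 0 <= y <= 1 ->
  (x - y) ^+ 2 <= (1 - x) + (1 - y).
Proof.
move=> /andP[x0 x1] /andP[y0 y1]; case: (leP x y) => h; nra.
Qed.

Variables (I : finType) (mu la al be : I -> R).
Hypotheses (mu01 : forall k, 0 <= mu k <= 1) (la0 : forall k, 0 <= la k)
  (alE : forall k, al k = 1 - mu k) (beE : forall k, be k = al k ^+ 2 + la k)
  (be1 : forall k, be k <= 1).

Definition GG (x y : I -> nat) := \prod_k (be k ^+ minn (x k) (y k) *
                  al k ^+ ((x k - y k) + (y k - x k))).
Definition FF (x : I -> nat) := \prod_k al k ^+ x k.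

Section AB.
Variables (a b : I -> nat).
Let c k := minn (a k) (b k).
Let p k := (a k - b k)%N.
Let q k := (b k - a k)%N.
Let M := \prod_k be k ^+ c k.
Let m0 := \prod_k al k ^+ c k.
Let Bp := \prod_k be k ^+ p k.
Let Bq := \prod_k be k ^+ q k.
Let Ap := \prod_k al k ^+ p k.
Let Aq := \prod_k al k ^+ q k.

Let aE k : a k = (c k + p k)%N. Proof. rewrite /c /p; lia. Qed.
Let bE k : b k = (c k + q k)%N. Proof. rewrite /c /q; lia. Qed.

Let al01 k : 0 <= al k <= 1.
Proof. by rewrite alE; case/andP: (mu01 k) => h0 h1; rewrite subr_ge0 h1 lerBlDr lerDl h0. Qed.
Let alsq k : 0 <= al k ^+ 2 <= be k.
Proof. by rewrite beE sqr_ge0 lerDl la0. Qed.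

Let Gaa : GG a a = M * Bp.
Proof.
rewrite /GG /M /Bp -big_split /=; apply: eq_bigr => k _.
by rewrite minnn subnn addn0 expr0 mulr1 {1}aE exprD.
Qed.
Let Gbb : GG b b = M * Bq.
Proof.
rewrite /GG /M /Bq -big_split /=; apply: eq_bigr => k _.
by rewrite minnn subnn addn0 expr0 mulr1 {1}bE exprD.
Qed.
Let Gab : GG a b = M * (Ap * Aq).
Proof.
rewrite /GG /M /Ap /Aq -!big_split /=; apply: eq_bigr => k _.
by rewrite exprD.
Qed.
Let Gba : GG b a = M * (Ap * Aq).
Proof.
rewrite /GG /M /Ap /Aq -!big_split /=; apply: eq_bigr => k _.
by rewrite minnC addnC exprD.
Qed.
Let Fa : FF a = m0 * Ap.
Proof. by rewrite /FF /m0 /Ap -big_split /=; apply: eq_bigr => k _; rewrite aE exprD. Qed.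
Let Fb : FF b = m0 * Aq.
Proof. by rewrite /FF /m0 /Aq -big_split /=; apply: eq_bigr => k _; rewrite bE exprD. Qed.

Let prodsq (n : I -> nat) : (\prod_k al k ^+ n k) ^+ 2 = \prod_k (al k ^+ 2) ^+ n k.
Proof. by rewrite -prodrXl; apply: eq_bigr => k _; rewrite exprAC. Qed.

Let Mm0 : 0 <= M - m0 ^+ 2 <= \sum_k (c k)%:R * la k.
Proof.
rewrite /M /m0 prodsq.
have /andP[-> h] := prod_pow_diff (index_enum I) c alsq be1.
rewrite (le_trans h)//; apply: ler_sum => k _; rewrite beE addrAC subrr add0r //.
Qed.
Let Bpd : 0 <= Bp - Ap ^+ 2 <= \sum_k (p k)%:R * la k.
Proof.
rewrite /Bp /Ap prodsq.
have /andP[-> h] := prod_pow_diff (index_enum I) p alsq be1.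
rewrite (le_trans h)//; apply: ler_sum => k _; rewrite beE addrAC subrr add0r //.
Qed.
Let Bqd : 0 <= Bq - Aq ^+ 2 <= \sum_k (q k)%:R * la k.
Proof.
rewrite /Bq /Aq prodsq.
have /andP[-> h] := prod_pow_diff (index_enum I) q alsq be1.
rewrite (le_trans h)//; apply: ler_sum => k _; rewrite beE addrAC subrr add0r //.
Qed.
Let M01 : 0 <= M <= 1.
Proof.
apply: prod01 => k; case/andP: (alsq k) => h0 h1.
by rewrite exprn_ge0 ?(le_trans h0 h1)// exprn_ile1// (le_trans h0 h1).
Qed.
Let A01 (n : I -> nat) : 0 <= \prod_k al k ^+ n k <= 1.
Proof.
apply: prod01 => k; case/andP: (al01 k) => h0 h1.
by rewrite exprn_ge0// exprn_ile1.
Qed.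
Let Ad (n : I -> nat) : 1 - \prod_k al k ^+ n k <= \sum_k (n k)%:R * mu k.
Proof.
have h1 : forall k, 0 <= al k <= 1 by [].
have hx : forall k, 0 <= al k <= (fun _ => 1) k.
  by move=> k; case/andP: (al01 k) => h0 h2; rewrite h0 h2.
have /andP[_ h] := prod_pow_diff (index_enum I) n hx (fun _ => lexx 1).
have e : \prod_k (fun _ : I => (1:R)) k ^+ n k = 1 by apply: big1 => k _; rewrite expr1n.
rewrite e in h; rewrite (le_trans h)//; apply: ler_sum => k _.
by rewrite alE opprB addrC subrK.
Qed.

Lemma alg1 : 0 <= GG a b - FF a * FF b <= \sum_k (minn (a k) (b k))%:R * la k.
Proof.
rewrite Gab Fa Fb.
have -> : M * (Ap * Aq) - m0 * Ap * (m0 * Aq) = (M - m0 ^+ 2) * (Ap * Aq) by ring.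
case/andP: Mm0 => h0 h1; case/andP: (A01 p) => p0 p1; case/andP: (A01 q) => q0 q1.
rewrite mulr_ge0 ?mulr_ge0//= (le_trans _ h1)// ler_piMr// ?mulr_ge0// mulr_ile1//.
Qed.

Lemma alg3 : 0 <= GG b b - GG b a - GG a b + GG a a - (FF b - FF a) ^+ 2 <=
  \sum_k ((a k - b k) + (b k - a k))%N%:R * la k +
  (\sum_k (minn (a k) (b k))%:R * la k) * (\sum_k ((a k - b k) + (b k - a k))%N%:R * mu k).
Proof.
rewrite Gaa Gbb Gab Gba Fa Fb.
have -> : M * Bq - M * (Ap * Aq) - M * (Ap * Aq) + M * Bp - (m0 * Aq - m0 * Ap) ^+ 2 =
  M * (Bp - Ap ^+ 2) + M * (Bq - Aq ^+ 2) + (M - m0 ^+ 2) * (Ap - Aq) ^+ 2 by ring.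
case/andP: Mm0 => h0 h1; case/andP: Bpd => bp0 bp1; case/andP: Bqd => bq0 bq1.
case/andP: M01 => M0 M1.
have sq : (Ap - Aq) ^+ 2 <= \sum_k ((a k - b k) + (b k - a k))%N%:R * mu k.
  rewrite (le_trans (sq_diff_le (A01 p) (A01 q)))//.
  have -> : \sum_k ((a k - b k) + (b k - a k))%N%:R * mu k =
    \sum_k (p k)%:R * mu k + \sum_k (q k)%:R * mu k.
    by rewrite -big_split /=; apply: eq_bigr => k _; rewrite natrD mulrDl.
  by rewrite lerD// Ad.
have sl : \sum_k ((a k - b k) + (b k - a k))%N%:R * la k =
    \sum_k (p k)%:R * la k + \sum_k (q k)%:R * la k.
  by rewrite -big_split /=; apply: eq_bigr => k _; rewrite natrD mulrDl.
apply/andP; split.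
  by rewrite !addr_ge0// mulr_ge0// sqr_ge0.
rewrite sl lerD// ?lerD//.
- by rewrite (le_trans _ bp1)// ler_piMl.
- by rewrite (le_trans _ bq1)// ler_piMl.
- by rewrite ler_pM// sqr_ge0.
Qed.

End AB.
End Alg.


Section Cov.
Context {d : measure_display} {T : measurableType d} {R : realType}
  (P : probability T R).

Lemma cov_gen (X Y : T -> R) : bmf X -> bmf Y ->
  covariance P X Y = (Ex P (X \* Y) - Ex P X * Ex P Y)%:E.
Proof.
move=> bX bY; have bXY := bmfM bX bY.
rewrite covarianceE ?bmf_Lfun//.
by rewrite (ExE P bXY) (ExE P bX) (ExE P bY) -EFinM -EFinB.
Qed.

Let pp (A : set T) := fine (P A).

Lemma cov_ind1 (A B : set T) : measurable A -> measurable B ->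
  covariance P (cst 1 \- \1_A) (cst 1 \- \1_B) =
  (pp (A `&` B) - pp A * pp B)%:E.
Proof.
move=> mA mB.
have bA : bmf (cst 1 \- \1_A : T -> R) := bmfB (bmf_cst 1) (bmf_indic mA).
have bB : bmf (cst 1 \- \1_B : T -> R) := bmfB (bmf_cst 1) (bmf_indic mB).
rewrite cov_gen//; congr (_%:E).
have -> : (cst 1 \- \1_A) \* (cst 1 \- \1_B) =
  ((cst 1 \- \1_A) \- \1_B) \+ \1_(A `&` B) :> (T -> R).
  by apply/funext => w /=; rewrite indicI /=; ring.
rewrite ExD ?ExB ?Ex_cst ?Ex_indic //; try solve [exact: bmf_cst | exact: measurableI | apply: bmfB => //; exact: bmf_indic | exact: bmf_indic | apply: bmf_indic; exact: measurableI].
rewrite /pp; ring.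
Qed.

Lemma cov_ind (A1 A2 B1 B2 : set T) : measurable A1 -> measurable A2 ->
  measurable B1 -> measurable B2 ->
  covariance P ((cst 1 \- \1_A1) \- (cst 1 \- \1_A2)) ((cst 1 \- \1_B1) \- (cst 1 \- \1_B2)) =
  (pp (A2 `&` B2) - pp (A2 `&` B1) - pp (A1 `&` B2) + pp (A1 `&` B1)
   - (pp A2 - pp A1) * (pp B2 - pp B1))%:E.
Proof.
move=> mA1 mA2 mB1 mB2.
have bA : bmf ((cst 1 \- \1_A1) \- (cst 1 \- \1_A2) : T -> R).
  by apply: bmfB; apply: bmfB; first exact: bmf_cst; try exact: bmf_cst; exact: bmf_indic.
have bB : bmf ((cst 1 \- \1_B1) \- (cst 1 \- \1_B2) : T -> R).
  by apply: bmfB; apply: bmfB; first exact: bmf_cst; try exact: bmf_cst; exact: bmf_indic.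
rewrite cov_gen//; congr (_%:E).
have -> : ((cst 1 \- \1_A1) \- (cst 1 \- \1_A2)) \* ((cst 1 \- \1_B1) \- (cst 1 \- \1_B2)) =
  ((\1_(A2 `&` B2) \- \1_(A2 `&` B1)) \- \1_(A1 `&` B2)) \+ \1_(A1 `&` B1) :> (T -> R).
  by apply/funext => w /=; rewrite !indicI /=; ring.
have -> : (cst 1 \- \1_A1) \- (cst 1 \- \1_A2) = \1_A2 \- \1_A1 :> (T -> R).
  by apply/funext => w /=; ring.
have -> : (cst 1 \- \1_B1) \- (cst 1 \- \1_B2) = \1_B2 \- \1_B1 :> (T -> R).
  by apply/funext => w /=; ring.
have mI X Y : measurable X -> measurable Y -> bmf (\1_(X `&` Y) : T -> R).
  by move=> mX mY; apply: bmf_indic; exact: measurableI.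
rewrite ExD ?ExB ?Ex_indic //; try solve [exact: bmf_cst | exact: measurableI | exact: bmf_indic | exact: mI | apply: bmfB; exact: mI | apply: bmfB; [apply: bmfB|]; exact: mI].
Qed.

End Cov.


Section Final.
Context {d : measure_display} {T : measurableType d} {R : realType} {m : nat}
  (C : 'I_m -> nat -> 'I_m -> nat -> T -> bool)
  (hC1 : forall k l i j, measurable [set w | C k l i j w]) (i : 'I_m).

Lemma mZs (a : 'I_m -> nat) x : measurable (Zs C i a x).
Proof.
rewrite [X in measurable X](_ : _ = [set w | forall k : 'I_m,
   (\bigcap_(l' in [set: nat]) [set w | (l' < a k)%N -> C k l' i x w = false]) w]).
  apply: (@measurable_all _ _ R) => k; apply: bigcapT_measurable => l'.
  case: (ltnP l' (a k)) => h.
    rewrite [X in measurable X](_ : _ = ~` [set w | C k l' i x w]).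
      exact: measurableC.
    apply/seteqP; split => w /=.
      by move/(_ isT) => ->.
    by move=> hw _; apply/negbTE/negP.
  rewrite [X in measurable X](_ : _ = setT); first exact: measurableT.
  by apply/seteqP; split => w //= _.
apply/seteqP; split => w /=.
  by move=> H k l' _ hl; exact: H.
by move=> H k l' hl; exact: H.
Qed.

Lemma chiE (N : 'I_m -> nat) (pi : 'I_m -> R) x (t : 'I_m -> R) :
  chi N pi C i x t =
  cst 1 \- \1_(Zs C i (fun k => Num.truncn (t k * Ntilde N pi k)) x).
Proof.
apply/funext => w; rewrite /chi /= !indicE.
case: (boolP (w \in Zs C i _ x)) => h.
  rewrite memNset ?subrr//.
  move=> [k [l' [hl hc]]]; move: h; rewrite inE => /(_ k l' hl).
  by rewrite hc.
rewrite mem_set ?subr0//.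
have H2 : ~ (forall k l', (l' < Num.truncn (t k * Ntilde N pi k))%N -> C k l' i x w = false).
  by move=> H; move/negP: h; apply; rewrite inE.
apply: contrapT => H3; apply: H2 => k l' hl; apply/negbTE/negP => hc.
by apply: H3; exists k, l'.
Qed.

End Final.

Local Close Scope classical_set_scope.


Theorem lemma3p1 (d : measure_display) (T : measurableType d) (R : realType)
  (P : probability T R) (m : nat) (hm : (0 < m)%N)
  (N : 'I_m -> nat) (hN : forall i, (0 < N i)%N)
  (pi : 'I_m -> R) (hpi : forall i, 0 < pi i)
  (V : 'I_m -> nat -> 'I_m -> T -> R)
  (C : 'I_m -> nat -> 'I_m -> nat -> T -> bool)
  (hV : infectivity_vectors P V) (hC : contact_model P N V C)
  (i : 'I_m) (j l : nat) (hjl : (j < l)%N) (hl : (l < N i)%N)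
  (t u : 'I_m -> R) (ht : forall k, 0 <= t k) (hu : forall k, 0 <= u k) :
  let Nt := Ntilde N pi in
  let Dk := fun k => (Num.truncn (Num.max (t k) (u k) * Nt k))%:R
                     - (Num.truncn (Num.min (t k) (u k) * Nt k))%:R in
  let B := \sum_(k < m) Num.min (t k) (u k) * Nt k * lambda_ P V k i in
  [/\ (0 <= covariance P (chi N pi C i j t) (chi N pi C i l u))%E,
      (covariance P (chi N pi C i j t) (chi N pi C i l u) <= B%:E)%E &
      (`| covariance P (chi N pi C i j t \- chi N pi C i j u)
                       (chi N pi C i l t \- chi N pi C i l u) |
       <= (6 * (\sum_(k < m) Dk k * mu_ P V k i) * B
           + 2 * \sum_(k < m) Dk k * lambda_ P V k i)%:E)%E].
Proof.
move=> Nt Dk B.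
have hC1 : forall k l i j, measurable [set w | C k l i j w] by case: hC.
pose a := fun k => Num.truncn (t k * Nt k).
pose b := fun k => Num.truncn (u k * Nt k).
have Nt0 : forall k, 0 <= Nt k.
  by move=> k; rewrite /Nt /Ntilde mulr_ge0// ltW.
have jl' : j != l by rewrite neq_ltn hjl.
have jN : (j < N i)%N by exact: ltn_trans hjl hl.
pose al k := gk P V i k 1.
pose be k := gk P V i k 2.
pose mu k := mu_ P V k i.
pose la k := lambda_ P V k i.
have bX k : bmf (V k 0 i) := bmf01 (mV hV k 0 i) (V01 hV k 0 i).
have mu01 k : 0 <= mu k <= 1 := Ex01 P (mV hV k 0 i) (V01 hV k 0 i).
have la0 k : 0 <= la k by rewrite /la /lambda_; apply: fine_ge0; exact: variance_ge0.
have alE k : al k = 1 - mu k.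
  rewrite /al /gk.
  have -> : (fun w => hfun 1 (V k 0 i w)) = cst 1 \- V k 0 i.
    by apply/funext => w; rewrite /hfun expr1.
  by rewrite ExB ?Ex_cst//; exact: bmf_cst.
have beE k : be k = al k ^+ 2 + la k.
  have laE : la k = Ex P (V k 0 i \* V k 0 i) - mu k ^+ 2.
    by rewrite /la /lambda_ /variance cov_gen// expr2.
  rewrite laE alE /be /gk.
  have -> : (fun w => hfun 2 (V k 0 i w)) = ((cst 1 \- V k 0 i) \- V k 0 i) \+ V k 0 i \* V k 0 i.
    by apply/funext => w; rewrite /hfun /=; ring.
  rewrite ExD ?ExB ?Ex_cst //; try solve [exact: bmf_cst | exact: bmfM | apply: bmfB => //; exact: bmf_cst | apply: bmfB => //; apply: bmfB => //; exact: bmf_cst].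
  by rewrite (_ : mu k = Ex P (V k 0 i)) //; ring.
have be1 k : be k <= 1.
  by case/andP: (Ex01 P (measurableT_comp (mhfun 2) (mV hV k 0 i)) (fun w => hfun01 2 (V01 hV k 0 i w))).
have J x y xx yy : xx != yy -> (xx < N i)%N -> (yy < N i)%N ->
    fine (P (Zs C i x xx `&` Zs C i y yy)%classic) = GG al be x y.
  by move=> h1 h2 h3; rewrite (joint hV hC x y h1 h2 h3).
have Fj x : fine (P (Zs C i x j)) = FF al x.
  have -> : Zs C i x j = (Zs C i x j `&` Zs C i (fun _ => 0%N) l)%classic.
    by apply/seteqP; split => w /=; [move=> h; split | case].
  rewrite J //; rewrite /GG /FF; apply: eq_bigr => k _.
  by rewrite minn0 subn0 sub0n addn0 expr0 mul1r.
have Fl x : fine (P (Zs C i x l)) = FF al x.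
  have -> : Zs C i x l = (Zs C i (fun _ => 0%N) j `&` Zs C i x l)%classic.
    by apply/seteqP; split => w /=; [move=> h; split | case].
  rewrite J //; rewrite /GG /FF; apply: eq_bigr => k _.
  by rewrite min0n subn0 sub0n add0n expr0 mul1r.
have chE x (t' : 'I_m -> R) :
    chi N pi C i x t' = cst 1 \- \1_(Zs C i (fun k => Num.truncn (t' k * Nt k)) x).
  exact: chiE.
have minB : \sum_(k < m) (minn (a k) (b k))%:R * la k <= B.
  rewrite /B; apply: ler_sum => k _; rewrite ler_wpM2r//.
  case: (leP (t k) (u k)) => h.
    apply: (@le_trans _ _ (a k)%:R); first by rewrite ler_nat geq_minl.
    by rewrite /a truncn_le mulr_ge0.
  apply: (@le_trans _ _ (b k)%:R); first by rewrite ler_nat geq_minr.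
  by rewrite /b truncn_le mulr_ge0.
have A1 := alg1 mu01 la0 alE beE be1 a b.
have A3 := alg3 mu01 la0 alE beE be1 a b.
have lj : l != j by rewrite eq_sym.
have mZ : forall (x : 'I_m -> nat) y, measurable (Zs C i x y) by move=> x y; exact: mZs.
have DkE k : Dk k = ((a k - b k) + (b k - a k))%N%:R.
  rewrite /Dk /a /b; case: (leP (t k) (u k)) => h.
    have ab : (Num.truncn (t k * Nt k) <= Num.truncn (u k * Nt k))%N.
      by rewrite le_truncn// ler_wpM2r.
    by rewrite -natrB // (eqP ab) add0n.
  have ab : (Num.truncn (u k * Nt k) <= Num.truncn (t k * Nt k))%N.
    by rewrite le_truncn// ler_wpM2r// ltW.
  by rewrite -natrB // (eqP ab) addn0.
have S1 : \sum_(k < m) Dk k * lambda_ P V k i =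
          \sum_(k < m) ((a k - b k) + (b k - a k))%N%:R * la k.
  by apply: eq_bigr => k _; rewrite DkE.
have S3 : \sum_(k < m) Dk k * mu_ P V k i =
          \sum_(k < m) ((a k - b k) + (b k - a k))%N%:R * mu k.
  by apply: eq_bigr => k _; rewrite DkE.
rewrite !chE.
rewrite (cov_ind1 P (mZ a j) (mZ b l)) (J a b j l) // Fj Fl.
rewrite (cov_ind P (mZ a j) (mZ b j) (mZ a l) (mZ b l)).
rewrite (J b b j l) // (J b a j l) // (J a b j l) // (J a a j l) // !Fj !Fl.
case/andP: A1 => a10 a11; case/andP: A3 => a30 a31.
split.
- by rewrite lee_fin.
- by rewrite lee_fin (le_trans a11 minB).
rewrite abse_EFin lee_fin -expr2 ger0_norm// S1 S3.
have X1ge0 : 0 <= \sum_(k < m) ((a k - b k) + (b k - a k))%N%:R * la k.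
  by apply: sumr_ge0 => k _; rewrite mulr_ge0.
have X3ge0 : 0 <= \sum_(k < m) ((a k - b k) + (b k - a k))%N%:R * mu k.
  by apply: sumr_ge0 => k _; rewrite mulr_ge0//; case/andP: (mu01 k).
have Yge0 : 0 <= \sum_(k < m) (minn (a k) (b k))%:R * la k.
  by apply: sumr_ge0 => k _; rewrite mulr_ge0.
move: a31 minB X1ge0 X3ge0 Yge0.
set X1 := \sum_(k < m) ((a k - b k) + (b k - a k))%N%:R * la k.
set X3 := \sum_(k < m) ((a k - b k) + (b k - a k))%N%:R * mu k.
set Y := \sum_(k < m) (minn (a k) (b k))%:R * la k.
set c3 := _ - _ ^+ 2.
move=> h1 h2 h3 h4 h5; nra.
Qed.
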